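(* For every pair of integers $k\ge3$ and $f\ge1$ there is $n_1=n_1(k,f)$ such that for every $n\ge n_1$ divisible by $k$, the graph $B_{k,n/k}$ (which has $n$ vertices) is $\frac{1}{2k^2}$-far from being induced $\{C_4,B_{k,f}\}$-free.
   Context: For integers $k\ge3$ and $m\ge1$, $B_{k,m}$ is the graph obtained from the cycle $C_k$ by replacing each vertex by a clique of size $m$ and each edge by a complete bipartite graph between the corresponding cliques (non-adjacent vertices of $C_k$ give empty bipartite graphs). An $n$-vertex graph is $\varepsilon$-far from a property if at least $\varepsilon n^2$ edge additions/deletions are needed to obtain the property. A graph is induced $\mathcal F$-free if it contains no induced subgraph isomorphic to any member of $\mathcal F$. *)

(* Defs.v *)
From mathcomp Require Import all_boot all_order all_algebra.
Set Implicit Arguments. Unset Strict Implicit. Unset Printing Implicit Defensive.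
Import Order.TTheory GRing.Theory Num.Theory.

Definition is_graph (V : finType) (e : rel V) : Prop :=
  symmetric e /\ irreflexive e.

Definition cyc_adj (k : nat) (i j : 'I_k) : bool :=
  (val j == (val i).+1 %% k) || (val i == (val j).+1 %% k).

Arguments cyc_adj : clear implicits.

Definition C4 : rel 'I_4 := fun i j => (i != j) && cyc_adj 4 i j.

(* B_{k,m}: blow-up of C_k, each vertex replaced by a clique of size m,
   each edge by a complete bipartite graph. Vertex (i,a): clique i, index a. *)
Definition Bgraph (k m : nat) : rel ('I_k * 'I_m) :=
  fun x y => (x != y) && ((x.1 == y.1) || cyc_adj k x.1 y.1).

Arguments Bgraph : clear implicits.
Definition induced_in (W V : finType) (eH : rel W) (e : rel V) : Prop :=
  exists h : W -> V, injective h /\ forall x y, eH x y = e (h x) (h y).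

Definition ind_free_C4_B (k f : nat) (V : finType) (e : rel V) : Prop :=
  ~ induced_in C4 e /\ ~ induced_in (Bgraph k f) e.

(* Number of unordered vertex pairs on which e and e' differ
   (ordered differing pairs counted, then halved; exact for symmetric rels). *)
Definition edit_dist (V : finType) (e e' : rel V) : nat :=
  #|[set p : V * V | (p.1 != p.2) && (e p.1 p.2 != e' p.1 p.2)]| %/ 2.

Definition far_from (V : finType) (e : rel V) (P : rel V -> Prop) (eps : rat)
  : Prop :=
  forall e' : rel V, is_graph e' -> P e' ->
    (eps * (#|V| ^ 2)%:R <= (edit_dist e e')%:R)%R.

(* Main.v *)
Require Import Defs.
From mathcomp Require Import all_boot all_order all_algebra zify ring.
Set Implicit Arguments. Unset Strict Implicit. Unset Printing Implicit Defensive.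

Lemma card_sum (T : finType) (A : {set T}) : #|A| = \sum_(x : T) (x \in A : nat).
Proof. by rewrite -sum1_card big_mkcond /=; apply: eq_bigr => x _; case: (x \in A). Qed.

Lemma core (P : finType) (m F D : nat) (N : P -> {set 'I_m}) :
  0 < D -> 4 * D * F < m -> 0 < #|P| ->
  #|P| * m <= D * \sum_(p : P) #|N p| ->
  exists T : {set 'I_m}, #|T| = F /\
    #|P| <= 2 * D * (4 * D) ^ F * #|[set p | T \subset N p]|.
Proof.
move=> D0 Fm P0 Hsum.
set Q := [set p | m <= 2 * D * #|N p|].
have HQ : #|P| <= 2 * D * #|Q|.
  have e1 : \sum_(p : P) #|N p| = \sum_(p in Q) #|N p| + \sum_(p in ~: Q) #|N p|.
    rewrite (bigID (fun p => p \in Q)) /=; congr (_ + _).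
    by apply: eq_bigl => p; rewrite in_setC.
  have b1 : \sum_(p in Q) #|N p| <= #|Q| * m.
    rewrite -sum_nat_const; apply: leq_sum => p _.
    by rewrite -[m in _ <= m]card_ord max_card.
  have b2 : 2 * D * \sum_(p in ~: Q) #|N p| <= #|~: Q| * m.
    rewrite big_distrr /= -sum_nat_const; apply: leq_sum => p.
    rewrite in_setC inE -ltnNge => /ltnW. by [].
  have b3 : #|~: Q| <= #|P| by apply: max_card.
  have : #|P| * m <= 2 * D * #|Q| * m by nia.
  by rewrite leq_pmul2r //; lia.
have Q0 : 0 < #|Q| by nia.
have step : forall j, j <= F -> exists T : {set 'I_m}, #|T| = j /\
    #|Q| <= (4 * D) ^ j * #|[set p in Q | T \subset N p]|.
  elim=> [|j IH] hj.
    exists set0; rewrite cards0 expn0 mul1n; split=> //.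
    apply: subset_leq_card; apply/subsetP => p pQ; by rewrite inE pQ sub0set.
  have [T [cT HT]] := IH (ltnW hj).
  set QT := [set p in Q | T \subset N p] in HT.
  have QT0 : 0 < #|QT| by nia.
  have [v vT Hv] : exists2 v, v \notin T &
      #|QT| <= 4 * D * #|[set p in QT | v \in N p]|.
    apply/exists_inP; rewrite -[X in is_true X]negbK; apply/negP.
    rewrite negb_exists_in => /forall_inP Hn.
    pose S := \sum_(p in QT) #|N p :\: T|.
    have Sx : S = \sum_(v : 'I_m) #|[set p in QT | v \in N p :\: T]|.
      rewrite /S (eq_bigr (fun p => \sum_(v : 'I_m) (v \in N p :\: T : nat))); last by move=> p _; rewrite card_sum.
      rewrite exchange_big /=; apply: eq_bigr => v _.
      rewrite card_sum big_mkcond /=; apply: eq_bigr => p _. rewrite !inE; by case: (_ && _).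
    have up : 4 * D * S <= m * (#|QT| - 1).
      have -> : m * (#|QT| - 1) = \sum_(v < m) (#|QT| - 1).
        by rewrite big_const_ord iter_addn_0 mulnC.
      rewrite Sx big_distrr /=.
      apply: leq_sum => v _.
      case vT: (v \in T).
        have -> : [set p in QT | v \in N p :\: T] = set0.
          by apply/setP => p; rewrite !inE vT /= andbF.
        by rewrite cards0 muln0.
      have := Hn v (negbT vT); rewrite -ltnNge => h.
      have -> : [set p in QT | v \in N p :\: T] = [set p in QT | v \in N p].
        by apply/setP => p; rewrite !inE vT.
      by have := leq_sub2r 1 h; rewrite subn1.
    have lo : #|QT| * m.+1 <= 4 * D * S.
      rewrite /S big_distrr /= -sum_nat_const; apply: leq_sum => p.
      rewrite inE => /andP [pQ _]; move: pQ; rewrite inE => pQ.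
      have : #|N p| - #|T| <= #|N p :\: T|.
        rewrite cardsD leq_sub2l //; apply: subset_leq_card; exact: subsetIr.
      rewrite cT => H.
      have h1 : 4 * D * j < m.
        apply: leq_ltn_trans Fm; rewrite leq_mul2l; apply/orP; right; exact: ltnW.
      have h2 := leq_mul (leqnn (4 * D)) H.
      rewrite mulnBr in h2.
      move: h1 h2 pQ; rewrite -!mulnA.
      move: (D * j) (D * #|N p|) (D * #|N p :\: T|) => x y z; lia.
    nia.
  exists (v |: T); split; first by rewrite cardsU1 vT cT.
  apply: (leq_trans HT); rewrite expnSr -mulnA leq_mul2l; apply/orP; right.
  apply: (leq_trans Hv); rewrite leq_mul2l; apply/orP; right.
  apply: subset_leq_card; apply/subsetP => p; rewrite !inE => /andP [/andP [pQ TN] vN].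
  by rewrite pQ subUset sub1set vN TN.
have [T [cT HT]] := step F (leqnn F).
exists T; split=> //.
apply: (leq_trans HQ); rewrite -(mulnA (2 * D) ((4 * D) ^ F)); apply: leq_mul => //.
apply: (leq_trans HT); apply: leq_mul => //.
apply: subset_leq_card; apply/subsetP => p; rewrite !inE => /andP [_ ->] //.
Qed.

Definition upd (k m : nat) (t : {ffun 'I_k -> 'I_m}) (j : 'I_k) (v : 'I_m) :
  {ffun 'I_k -> 'I_m} := [ffun i => if i == j then v else t i].

Definition goodj (k m : nat) (H : {set {ffun 'I_k -> 'I_m}}) (j : nat)
  (S : {ffun 'I_k -> {set 'I_m}}) (t : {ffun 'I_k -> 'I_m}) : bool :=
  [forall t' : {ffun 'I_k -> 'I_m},
    ([forall i : 'I_k, (i < j) ==> (t' i \in S i)] &&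
     [forall i : 'I_k, (j <= i) ==> (t' i == t i)]) ==> (t' \in H)].

Fixpoint Dseq (F j : nat) : nat :=
  match j with 0 => 2 | j'.+1 => 2 * Dseq F j' * (4 * Dseq F j') ^ F end.

Lemma Dseq_pos F j : 0 < Dseq F j.
Proof. elim: j => //= j IH; by rewrite !muln_gt0 IH expn_gt0 muln_gt0 IH. Qed.

Lemma Dseq_mono F j k : j <= k -> Dseq F j <= Dseq F k.
Proof.
move=> /subnK <-; elim: (k - j) => //= n IH.
have : 0 < (4 * Dseq F (n + j)) ^ F by rewrite expn_gt0 muln_gt0 Dseq_pos.
move: IH; move: (Dseq F j) (Dseq F (n + j)) ((4 * Dseq F (n + j)) ^ F) => a b c; nia.
Qed.

Lemma sum_card_pairs (T : finType) (m : nat) (N : T -> {set 'I_m}) :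
  \sum_(t : T) #|N t| = #|[set tv : T * 'I_m | tv.2 \in N tv.1]|.
Proof.
rewrite card_sum (eq_bigr (fun t => \sum_(v : 'I_m) (v \in N t : nat))); last by move=> t _; rewrite card_sum.
by rewrite pair_big /=; apply: eq_bigr => -[t v] _; rewrite inE.
Qed.

Lemma iter_box (k m F : nat) (H : {set {ffun 'I_k -> 'I_m}}) :
  0 < m -> 4 * Dseq F k * F < m -> m ^ k <= 2 * #|H| ->
  forall j, j <= k -> exists S : {ffun 'I_k -> {set 'I_m}},
    (forall i : 'I_k, i < j -> #|S i| = F) /\
    m ^ k <= Dseq F j * #|[set t | goodj H j S t]|.
Proof.
move=> m0 Fm HH; elim=> [|j IH] hj.
  exists [ffun=> set0]; split=> // .
  have -> : [set t | goodj H 0 [ffun=> set0] t] = H => //.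
  apply/setP => t; rewrite inE; apply/forallP/idP.
    move=> /(_ t) /implyP; apply; apply/andP; split; apply/forallP => i //; by rewrite eqxx implybT.
  move=> tH t'; apply/implyP => /andP [_ /forallP h].
  have -> : t' = t by apply/ffunP => i; apply/eqP; exact: h.
  exact: tH.
have [S [HS HD]] := IH (ltnW hj).
pose jo : 'I_k := Ordinal hj.
set D := Dseq F j.
pose N := fun t => [set v | goodj H j S (upd t jo v)].
have D0 : 0 < D by apply: Dseq_pos.
have FmD : 4 * D * F < m.
  apply: leq_ltn_trans Fm; rewrite leq_mul2r leq_mul2l Dseq_mono ?orbT //; exact: ltnW.
have P0 : 0 < #|{ffun 'I_k -> 'I_m}| by rewrite card_ffun card_ord expn_gt0 m0.
have Hs : #|{ffun 'I_k -> 'I_m}| * m <= D * \sum_t #|N t|.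
  rewrite sum_card_pairs.
  pose phi := fun tv : {ffun 'I_k -> 'I_m} * 'I_m => (upd tv.1 jo tv.2, tv.1 jo).
  have phiK : involutive phi.
    move=> [t v]; rewrite /phi /=; congr (_, _).
      by apply/ffunP => i; rewrite !ffunE; case: eqP => // ->.
    by rewrite ffunE eqxx.
  have -> : [set tv | tv.2 \in N tv.1] = phi @^-1: setX [set t | goodj H j S t] setT.
    by apply/setP => [[t v]]; rewrite !inE andbT.
  rewrite card_preimset; last exact: inv_inj.
  by rewrite cardsX cardsT card_ord card_ffun !card_ord mulnA leq_mul2r HD orbT.
have [T [cT HT]] := core D0 FmD P0 Hs.
exists [ffun i => if i == jo then T else S i]; split.
  move=> i hi; rewrite ffunE; case: eqP => // /eqP ne; apply: HS.
  by move: hi; rewrite ltnS leq_eqVlt => /orP [/eqP e|//]; case/eqP: ne; apply: val_inj.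
move: HT; rewrite card_ffun !card_ord => HT; apply: (leq_trans HT).
rewrite /= -/D leq_mul2l; apply/orP; right; apply: subset_leq_card.
apply/subsetP => t; rewrite !inE => /subsetP TN.
apply/forallP => t'; apply/implyP => /andP [/forallP h1 /forallP h2].
have vT : t' jo \in T by have := implyP (h1 jo) (ltnSn j); rewrite ffunE eqxx.
have := TN _ vT; rewrite inE => /forallP /(_ t') /implyP; apply.
apply/andP; split; apply/forallP => i; apply/implyP => hi.
  have := implyP (h1 i) (ltnW hi); rewrite ffunE.
  by case: eqP => // e; move: hi; rewrite e /= ltnn.
rewrite ffunE; case: (i =P jo) => [->|ne] //.
have hi' : j < i by rewrite ltn_neqAle hi andbT; apply/eqP => e; apply: ne; apply: val_inj.
exact: implyP (h2 i) hi'.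
Qed.

Lemma Bgraph_sym k m : symmetric (Bgraph k m).
Proof.
move=> x y; rewrite /Bgraph eq_sym; congr (_ && _); rewrite eq_sym; congr (_ || _).
by rewrite /cyc_adj orbC.
Qed.

Lemma edit_half (V : finType) (e e' : rel V) : symmetric e -> symmetric e' ->
  edit_dist e e' = #|[set p : V * V | [&& p.1 != p.2, e p.1 p.2 != e' p.1 p.2 &
       enum_rank p.1 < enum_rank p.2]]|.
Proof.
move=> se se'.
set A := [set p : V * V | (p.1 != p.2) && (e p.1 p.2 != e' p.1 p.2)].
set A1 := [set p : V * V | [&& _, _ & _]].
set A2 := [set p : V * V | [&& p.1 != p.2, e p.1 p.2 != e' p.1 p.2 &
       enum_rank p.2 < enum_rank p.1]].
have eA : A = A1 :|: A2.
  apply/setP => -[x y]; rewrite !inE /=.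
  case: eqP => //= /eqP ne; case: (e x y != e' x y) => //=.
  have : enum_rank x != enum_rank y by apply: contra ne => /eqP /enum_rank_inj ->.
  by rewrite neq_ltn.
have dis : A1 :&: A2 = set0.
  apply/setP => -[x y]; rewrite !inE /=.
  case: (ltnP (enum_rank x) (enum_rank y)) => h; last by rewrite !andbF.
  by rewrite ltnNge (ltnW h) !andbF.
have c2 : #|A2| = #|A1|.
  pose sw := fun p : V * V => (p.2, p.1).
  have swK : involutive sw by case.
  have -> : A2 = sw @^-1: A1.
    by apply/setP => -[x y]; rewrite !inE /= (se x y) (se' x y) eq_sym.
  by rewrite card_preimset //; exact: inv_inj.
rewrite /edit_dist -/A eA.
have := cardsUI A1 A2; rewrite dis cards0 addn0 c2 => ->.
by rewrite addnn -muln2 mulnK.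
Qed.

Lemma card_C2 (k m : nat) (a b : 'I_k) (x y : 'I_m) : a != b ->
  #|[set t : {ffun 'I_k -> 'I_m} | (t a == x) && (t b == y)]| = m ^ (k - 2).
Proof.
move=> ab.
pose A := fun i : 'I_k => if i == a then [set x] else if i == b then [set y] else [set: 'I_m].
have -> : [set t : {ffun 'I_k -> 'I_m} | (t a == x) && (t b == y)] = setXn A.
  apply/setP => t; rewrite in_setXn !inE; apply/andP/forallP.
    move=> [/eqP ta /eqP tb] i; rewrite /A; have [->|ia] := eqVneq i a.
      by rewrite inE ta.
    by have [->|ib] := eqVneq i b; rewrite ?inE ?tb.
  move=> h; have := h a; have := h b; rewrite /A eqxx (negbTE ab) eq_sym (negbTE ab) eqxx !inE.
  by move=> -> ->.
rewrite cardsXn (eq_bigr (fun i => if ~~ ((i == a) || (i == b)) then m else 1)); last first.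
  move=> i _; rewrite /A; case: (i == a); first by rewrite cards1.
  by case: (i == b); rewrite ?cards1 // cardsT card_ord.
rewrite -big_mkcond /= prod_nat_const.
congr (_ ^ _).
have h := cardC (pred2 a b); rewrite card2 ab card_ord in h.
have -> : #|(fun i : 'I_k => ~~ ((i == a) || (i == b)))| = #|[predC pred2 a b]|.
  by apply: eq_card.
move: h; move: #|[predC pred2 a b]| => c; lia.
Qed.

Lemma count_H (k m : nat) (e' : rel ('I_k * 'I_m)) : symmetric e' -> 2 <= k ->
  2 * edit_dist (Bgraph k m) e' < m ^ 2 ->
  m ^ k <= 2 * #|[set t : {ffun 'I_k -> 'I_m} | [forall i, forall j, (i != j) ==>
      (e' (i, t i) (j, t j) == Bgraph k m (i, t i) (j, t j))]]|.
Proof.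
move=> se' k2; rewrite edit_half //; last exact: Bgraph_sym.
set A1 := [set p | _]; set H := [set t | _] => hA.
pose A1c := [set q in A1 | q.1.1 != q.2.1].
pose C := fun q : ('I_k * 'I_m) * ('I_k * 'I_m) =>
  [set t : {ffun 'I_k -> 'I_m} | (t q.1.1 == q.1.2) && (t q.2.1 == q.2.2)].
have bad : #|~: H| <= #|A1| * m ^ (k - 2).
  apply: (@leq_trans (#|A1c| * m ^ (k - 2))); last first.
    rewrite leq_mul2r; apply/orP; right; apply: subset_leq_card.
    by apply/subsetP => q; rewrite inE => /andP [].
  rewrite -sum_nat_const.
  rewrite (eq_bigr (fun q => \sum_t (t \in C q : nat))); last first.
    by move=> q; rewrite inE => /andP [_ ne]; rewrite -card_sum card_C2.
  rewrite exchange_big /= card_sum; apply: leq_sum => t _.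
  case tH: (t \in ~: H) => //.
  move: tH; rewrite inE /H inE => /forallPn [i /forallPn [j]].
  rewrite negb_imply => /andP [ij ne].
  pose x := (i, t i); pose y := (j, t j).
  have xy : x != y by apply: contra ij => /eqP [->].
  have rk : enum_rank x != enum_rank y by apply: contra xy => /eqP /enum_rank_inj ->.
  have [q qA qC] : exists2 q, q \in A1c & t \in C q.
    case: (ltnP (enum_rank y) (enum_rank x)) => h.
      exists (y, x); last by rewrite inE /= !eqxx.
      rewrite !inE /= h andbT; apply/andP; split; last by rewrite eq_sym.
      by rewrite eq_sym xy se' Bgraph_sym eq_sym.
    have h' : enum_rank x < enum_rank y by rewrite ltn_neqAle h rk.
    exists (x, y); last by rewrite inE /= !eqxx.
    rewrite !inE /= h' andbT; apply/andP; split=> //.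
    by rewrite xy eq_sym.
  by rewrite (bigD1 q) //= qC.
have tot : #|H| + #|~: H| = m ^ k by rewrite cardsC card_ffun !card_ord.
have : m ^ k = m ^ 2 * m ^ (k - 2) by rewrite -expnD subnKC.
move: bad tot hA; move: (m ^ k) (m ^ 2) (m ^ (k - 2)) #|H| #|~: H| #|A1| => a b c d e f.
nia.
Qed.

Lemma c4_lemma (V : finType) (e : rel V) : is_graph e -> ~ induced_in C4 e ->
  forall x x' y z, x != x' -> y != z -> e x y -> e y x' -> e x' z -> e z x ->
  e x x' || e y z.
Proof.
move=> [se ie] noC x x' y z xx yz exy eyx ex'z ezx.
apply/negPn/negP; rewrite negb_or => /andP [/negbTE nxx /negbTE nyz].
have ne : forall u v, e u v -> u != v by move=> u v; apply: contraTneq => ->; rewrite ie.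
have xy := ne _ _ exy; have yx' := ne _ _ eyx; have x'z := ne _ _ ex'z; have zx := ne _ _ ezx.
apply: noC.
exists (fun i : 'I_4 => match val i with 0 => x | 1 => y | 2 => x' | _ => z end).
split.
  move=> [[|[|[|[|i]]]] hi] [[|[|[|[|j]]]] hj] //= E; try (by apply: val_inj);
  move: xx yz xy yx' x'z zx; rewrite ?E ?eqxx //; try (by rewrite ?eqxx ?andbF ?orbT);
  try (move=> *; by rewrite ?eqxx in_; fail); by [].
have eyx' : e y x = true by rewrite se.
have ex'y : e x' y = true by rewrite se.
have ezx' : e z x' = true by rewrite se.
have exz : e x z = true by rewrite se.
have nx'x : e x' x = false by rewrite se.
have nzy : e z y = false by rewrite se.
move=> [[|[|[|[|i]]]] hi] [[|[|[|[|j]]]] hj] //=;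
  rewrite /C4 /cyc_adj /= ?ie ?exy ?eyx ?ex'z ?ezx ?eyx' ?ex'y ?ezx' ?exz ?nxx ?nyz ?nx'x ?nzy //.
Qed.

Lemma clique_embed (W V : finType) (eH : rel W) (e : rel V) (Q : {set V}) :
  is_graph e -> (forall x y, eH x y = (x != y)) -> #|W| <= #|Q| ->
  (forall x y, x \in Q -> y \in Q -> x != y -> e x y) -> induced_in eH e.
Proof.
move=> [se ie] hH hle hQ.
have hle' : #|W| <= #|Q| := hle.
pose h := fun w : W => @enum_val V (pred_of_set Q) (widen_ord hle' (enum_rank w)).
have hinj : injective h.
  move=> u v /enum_val_inj /(congr1 val) /= /val_inj /enum_rank_inj //.
exists h; split=> // x y; rewrite hH.
case: (eqVneq x y) => [->|ne]; first by rewrite ie.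
apply/esym/hQ; try exact: enum_valP.
by apply: contra ne => /eqP /hinj ->.
Qed.

Lemma modS' k x : x < k -> x.+1 %% k = if x.+1 == k then 0 else x.+1.
Proof. move=> h; case: eqP => [->|ne]; [by rewrite modnn | rewrite modn_small; lia]. Qed.

Lemma cyc_adjE k (x y : 'I_k) : cyc_adj k x y =
  ((y : nat) == (if x.+1 == k then 0 else x.+1)) ||
  ((x : nat) == (if y.+1 == k then 0 else y.+1)).
Proof. by rewrite /cyc_adj !modS' ?ltn_ord. Qed.

Section RatStep.
Import GRing.Theory Num.Theory.
Local Open Scope ring_scope.
Lemma ratstep (k m d : nat) : (0 < k)%N -> (m ^ 2 <= 2 * d)%N ->
  (1 / (2 * (k ^ 2)%:R)) * (((k * m) ^ 2)%:R) <= (d%:R : rat).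
Proof.
move=> k0 h.
have k0' : (k%:R : rat) != 0 by rewrite pnatr_eq0 -lt0n.
have -> : (1 / (2 * (k ^ 2)%:R)) * (((k * m) ^ 2)%:R) = (m ^ 2)%:R / 2 :> rat.
  rewrite expnMn natrM !natrX; field; by rewrite k0'.
rewrite ler_pdivrMr ?ltr0n // -natrM ler_nat mulnC //.
Qed.
End RatStep.

Definition nx (k y : nat) := if y.+1 == k then 0 else y.+1.
Definition cn (k a b : nat) := (b == nx k a) || (a == nx k b).

Lemma cycnat k x : 3 < k -> x < k ->
  let s := nx k x in let p := (if x == 0 then k.-1 else x.-1) in
  [/\ s != x, p != x, s != p,
      [/\ cn k x s, cn k s x, cn k x p & cn k p x] & cn k s p = false].
Proof.
move=> k4 hx /=; rewrite /cn /nx.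
case: (x =P 0) => e2; case: (x.+1 =P k) => e1; subst => /=.
all: (repeat split); repeat (case: ifP; intro); lia.
Qed.

Lemma cycfacts k (i : 'I_k) : 3 < k -> exists i1 i2 : 'I_k,
  [/\ i1 != i, i2 != i, i1 != i2,
      [/\ cyc_adj k i i1, cyc_adj k i1 i, cyc_adj k i i2 & cyc_adj k i2 i] &
      cyc_adj k i1 i2 = false].
Proof.
move=> k4.
have hli := ltn_ord i.
have [h1 h2 h3 [h4 h5 h6 h7] h8] := cycnat k4 hli.
have hi1 : nx k i < k by rewrite /nx; case: ifP; intro; lia.
have hi2 : (if i == 0 :> nat then k.-1 else i.-1) < k by case: ifP; intro; lia.
exists (Ordinal hi1), (Ordinal hi2).
have ne : forall u v : 'I_k, (u : nat) != v -> u != v by move=> u v; apply: contra => /eqP ->.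
have cE : forall u v : 'I_k, cyc_adj k u v = cn k u v by move=> u v; rewrite cyc_adjE.
rewrite !cE.
split; try (apply: ne; assumption); try split; assumption.
Qed.

Theorem lemma5p3 (k f : nat) :
  3 <= k -> 1 <= f ->
  exists n1 : nat, forall m : nat, n1 <= k * m ->
    far_from (Bgraph k m) (@ind_free_C4_B k f _)
      (1 / (2 * (k ^ 2)%:R))%R.
Proof.
move=> k3 f1.
pose F := if k == 3 then 3 * f else f.
have F0 : 0 < F by rewrite /F; case: (k == 3); lia.
pose M := 4 * Dseq F k * F + 1.
exists (k * M) => m hm.
have k0 : 0 < k by lia.
have hM : M <= m by rewrite leq_pmul2l in hm.
have m0 : 0 < m by move: hM; rewrite /M addn1; apply: leq_trans.
have Fm : 4 * Dseq F k * F < m by move: hM; rewrite /M addn1.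
move=> e' ge' [noC noB].
have [se ie] := ge'.
rewrite card_prod !card_ord; apply: ratstep => //.
rewrite leqNgt; apply/negP => hlt.
have HH := count_H se (ltnW k3) hlt.
set H := [set t | _] in HH.
have [S [HS HD]] := iter_box m0 Fm HH (leqnn k).
have [t0 t0g] : exists t0, t0 \in [set t | goodj H k S t].
  apply/set0Pn; rewrite -card_gt0.
  have : 0 < m ^ k by rewrite expn_gt0 m0.
  move: HD; move: (m ^ k) (Dseq F k) #|_| => a b c; nia.
have box : forall t' : {ffun 'I_k -> 'I_m}, (forall i, t' i \in S i) -> t' \in H.
  move=> t' ht'; move: t0g; rewrite inE => /forallP /(_ t') /implyP; apply.
  apply/andP; split; apply/forallP => i; apply/implyP => hi; first exact: ht'.
  by move: hi; rewrite leqNgt ltn_ord.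
have HS' : forall i, #|S i| = F by move=> i; apply: HS.
have Sne : forall i, exists a, a \in S i.
  by move=> i; apply/set0Pn; rewrite -card_gt0 HS'.
have clean : forall (i j : 'I_k) a b, i != j -> a \in S i -> b \in S j ->
    e' (i, a) (j, b) = cyc_adj k i j.
  move=> i j a b ij ha hb.
  pose t' := [ffun l => if l == i then a else if l == j then b else odflt a [pick x in S l]].
  have ht' : forall l, t' l \in S l.
    move=> l; rewrite /t' ffunE; case: (eqVneq l i) => [->//|li].
    case: (eqVneq l j) => [->//|lj].
    case: pickP => [x -> //|hn]; have [x hx] := Sne l; by rewrite hn in hx.
  have := box t' ht'; rewrite inE => /forallP /(_ i) /forallP /(_ j) /implyP /(_ ij) /eqP.
  have ji : j != i by rewrite eq_sym.
  rewrite /t' !ffunE eqxx (negbTE ji) eqxx => ->.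
  by rewrite /Bgraph /= xpair_eqE (negbTE ij).
case k3e : (k == 3).
  move/eqP: k3e => k3e; subst k.
  have cyc3 : forall i j : 'I_3, i != j -> cyc_adj 3 i j.
    by move=> [[|[|[|?]]] ?] [[|[|[|?]]] ?].
  have clq : exists j : 'I_3, forall a b, a \in S j -> b \in S j -> a != b -> e' (j, a) (j, b).
    case: (boolP [forall a, forall b, (a \in S ord0) ==> (b \in S ord0) ==> (a != b) ==> e' (ord0, a) (ord0, b)]).
      move=> /forallP h; exists ord0 => a b ha hb ab.
      by move: (h a) => /forallP /(_ b); rewrite ha hb ab.
    move=> /forallPn [a /forallPn [a']]; rewrite !negb_imply => /and4P [ha ha' aa' na].
    pose j1 : 'I_3 := Ordinal (isT : 1 < 3).
    exists j1 => b b' hb hb' bb'.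
    have := @c4_lemma _ e' ge' noC (ord0, a) (ord0, a') (j1, b) (j1, b').
    rewrite (negbTE na) /=; apply.
    - by rewrite xpair_eqE /=.
    - by rewrite xpair_eqE /=.
    - by rewrite clean ?cyc3.
    - by rewrite clean ?cyc3.
    - by rewrite clean ?cyc3.
    - by rewrite clean ?cyc3.
  have [j hj] := clq.
  apply: noB; apply: (@clique_embed _ _ _ _ (setX [set j] (S j))) => //.
  - move=> [x1 x2] [y1 y2]; rewrite /Bgraph /=.
    suff -> : (x1 == y1) || cyc_adj 3 x1 y1 by rewrite andbT.
    by case: x1 y1 => [[|[|[|?]]] ?] [[|[|[|?]]] ?].
  - by rewrite cardsX cards1 HS' card_prod !card_ord /F eqxx mul1n.
  - move=> [x1 x2] [y1 y2]; rewrite !inE /= => /andP [/eqP -> ha] /andP [/eqP -> hb] ne.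
    by apply: hj => //; apply: contra ne => /eqP ->.
have k4 : 3 < k by rewrite ltn_neqAle eq_sym k3e k3.
have HSf : forall i, #|S i| = f by move=> i; rewrite HS' /F k3e.
pose g := fun (i : 'I_k) (a : 'I_f) => @enum_val _ (pred_of_set (S i)) (cast_ord (esym (HSf i)) a).
have gS : forall i a, g i a \in S i by move=> i a; exact: enum_valP.
have ginj : forall i, injective (g i) by move=> i a b /enum_val_inj /cast_ord_inj.
have internal : forall i a b, a != b -> e' (i, g i a) (i, g i b).
  move=> i a b ab.
  have [i1 [i2 [i1i i2i i12 [c1 c2 c3 c4] c5]]] := cycfacts i k4.
  have := @c4_lemma _ e' ge' noC (i, g i a) (i, g i b) (i1, g i1 a) (i2, g i2 a).
  rewrite [e' (i1, _) (i2, _)]clean ?gS // ?c5 ?orbF.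
  apply.
  - by rewrite xpair_eqE eqxx /=; apply: contra ab => /eqP /ginj ->.
  - by rewrite xpair_eqE negb_and i12.
  - by rewrite clean ?gS // eq_sym.
  - by rewrite clean ?gS.
  - by rewrite clean ?gS // eq_sym.
  - by rewrite clean ?gS.
apply: noB; exists (fun p : 'I_k * 'I_f => (p.1, g p.1 p.2)); split.
  move=> [i a] [j b] /= [eij]; subst j => /ginj -> //.
move=> [i a] [j b] /=.
case: (eqVneq i j) => [<-|ij].
  rewrite /Bgraph /= eqxx orTb andbT xpair_eqE eqxx /=.
  case: (eqVneq a b) => [->|ab]; first by rewrite ie.
  by rewrite internal.
by rewrite clean ?gS // /Bgraph /= xpair_eqE (negbTE ij).
Qed.
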